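(* Let $n\ge 1$ and let $a=(a_1,\dots,a_n)$ be an inversion sequence. Then $a$ avoids each of the patterns $100$, $102$ and $201$ if and only if $a$ can be written as a concatenation $a=p_1\circ q_2\circ q_3$ where: (i) $p_1$ is a (possibly empty) non-decreasing sequence with $\max(p_1)<\max(a)$ (if $p_1$ is nonempty); (ii) $q_2$ is a nonempty sequence whose entries all lie in $\{\max(a),\operatorname{premax}(a)\}$, whose first entry is $\max(a)$, and in which the value $\operatorname{premax}(a)$ occurs at most once; (iii) $q_3$ is a (possibly empty) strictly decreasing sequence all of whose entries are $<\operatorname{premax}(a)$. (When $a$ has only one distinct value, $\operatorname{premax}(a)$ is undefined; then $p_1$ and $q_3$ are empty and $q_2=a$ consists only of copies of $\max(a)$.)
   Context: An inversion sequence of length $n$ is an integer sequence $(a_1,\dots,a_n)$ with $0\le a_i<i$ for all $i$. A pattern is a sequence $\sigma$ of non-negative integers containing every value from $0$ to $\max(\sigma)$; the reduction of a sequence replaces its smallest values by $0$, the next smallest by $1$, etc. A sequence $a$ contains $\sigma$ if some (not necessarily consecutive) subsequence of $a$ has reduction $\sigma$; otherwise $a$ avoids $\sigma$. For a sequence $a$, $\max(a)$ is its largest value and $\operatorname{premax}(a)$ is the largest value of $a$ strictly less than $\max(a)$. $\circ$ denotes concatenation. *)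

(* Defs.v *)
From mathcomp Require Import all_boot.
Set Implicit Arguments. Unset Strict Implicit. Unset Printing Implicit Defensive.

(* Inversion sequence of length n, stored 0-indexed: a = [:: a_1; ...; a_n]
   with 0 <= a_i < i, i.e. nth 0 a i < i.+1 for i < n. *)
Definition inv_seq (n : nat) (a : seq nat) : Prop :=
  size a = n /\ forall i, i < n -> nth 0 a i < i.+1.

Definition reduction (s : seq nat) : seq nat :=
  [seq size (undup [seq y <- s | y < x]) | x <- s].

Definition contains (a sigma : seq nat) : Prop :=
  exists s, subseq s a /\ reduction s = sigma.

Definition avoids (a sigma : seq nat) : Prop := ~ contains a sigma.

(* max(a) (only used for nonempty a) *)
Definition smax (a : seq nat) : nat := \max_(x <- a) x.

(* premax(a): largest value strictly below max(a); None when undefined,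
   i.e. when a has only one distinct value. *)
Definition premax (a : seq nat) : option nat :=
  if has (fun x => x < smax a) a
  then Some (\max_(x <- a | x < smax a) x) else None.

Definition good_decomp (a p1 q2 q3 : seq nat) : Prop :=
  a = p1 ++ q2 ++ q3 /\
  match premax a with
  | Some pm =>
      sorted leq p1 /\ (p1 != [::] -> smax p1 < smax a) /\
      q2 != [::] /\ all (fun x => (x == smax a) || (x == pm)) q2 /\
      head 0 q2 = smax a /\ count_mem pm q2 <= 1 /\
      sorted (fun x y => y < x) q3 /\ all (fun x => x < pm) q3
  | None =>
      p1 = [::] /\ q3 = [::] /\ q2 != [::] /\ all (fun x => x == smax a) q2
  end.

(* Main.v *)
Require Import Defs.
From mathcomp Require Import all_boot zify.
Set Implicit Arguments. Unset Strict Implicit.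

Definition Pb (x y z : nat) := [&& y < x, y <= z & z != x].

Ltac decifs := repeat (match goal with |- context [if ?b then _ else _] =>
  first [rewrite (_ : b = true); last by lia | rewrite (_ : b = false); last by lia] end).

Lemma red3_of x y z : Pb x y z ->
  reduction [:: x; y; z] = [:: 1; 0; 0] \/ reduction [:: x; y; z] = [:: 1; 0; 2] \/ reduction [:: x; y; z] = [:: 2; 0; 1].
Proof.
rewrite /reduction /Pb /= => /and3P[H1 H2 H3].
case: (ltngtP z x) => H4; last by rewrite H4 eqxx in H3.
- case: (ltngtP y z) => H5; try lia.
  + right; right. decifs. rewrite /= ?inE. decifs. done.
  + left. subst. decifs. rewrite /= ?inE. decifs. done.
- case: (ltngtP y z) => H5; try lia.
  + right; left. decifs. rewrite /= ?inE. decifs. done.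
Qed.

Lemma red3_to x y z sig : reduction [:: x; y; z] = sig ->
  sig = [:: 1; 0; 0] \/ sig = [:: 1; 0; 2] \/ sig = [:: 2; 0; 1] -> Pb x y z.
Proof.
rewrite /reduction /= => <-.
case: (ltngtP x y) => ?; case: (ltngtP y z) => ?; case: (ltngtP x z) => ?; try (exfalso; lia);
 decifs; rewrite /= ?inE; decifs; rewrite /Pb;
 first [ by case => [|[|]] | by move=> _; apply/and3P; split; lia ].
Qed.

Lemma sub_cons_idx (x : nat) (s a : seq nat) : subseq (x :: s) a ->
  exists i, i < size a /\ nth 0 a i = x /\ subseq s (drop i.+1 a).
Proof.
elim: a => [|w a IH] //=.
case: eqP => [->|_] H.
- by exists 0; rewrite drop0.
- have [i [H1 [H2 H3]]] := IH H. by exists i.+1.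
Qed.

Lemma idx_sub_cons (a : seq nat) (i : nat) (s : seq nat) : i < size a -> subseq s (drop i.+1 a) -> subseq (nth 0 a i :: s) a.
Proof.
elim: a i => [|w a IH] [|i] //=.
- by rewrite eqxx drop0.
- move=> Hi Hs. apply: subseq_trans (IH i Hi Hs) (subseq_cons a w).
Qed.

Definition bad (a : seq nat) := exists i j k, [/\ i < j, j < k, k < size a &
  Pb (nth 0 a i) (nth 0 a j) (nth 0 a k)].

Lemma contains_bad a sig : sig = [:: 1; 0; 0] \/ sig = [:: 1; 0; 2] \/ sig = [:: 2; 0; 1] ->
  contains a sig -> bad a.
Proof.
move=> Hsig [s [Hs Hr]].
have Hsz : size s = 3 by rewrite -(size_map (fun x => size (undup [seq y <- s | y < x])) s);
  rewrite -/(reduction s) Hr; case: Hsig => [->|[->|->]].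
case: s Hs Hr Hsz => [|x [|y [|z [|? ?]]]] //= Hs Hr _.
have HP := red3_to Hr Hsig.
have [i [Hi [Hx Hs1]]] := sub_cons_idx Hs.
have [j [Hj [Hy Hs2]]] := sub_cons_idx Hs1.
have [k [Hk [Hz _]]] := sub_cons_idx Hs2.
rewrite size_drop in Hj. rewrite drop_drop !size_drop in Hk.
rewrite nth_drop in Hy. rewrite drop_drop nth_drop in Hz.
have {}Hk : k < size a - (j.+1 + i.+1) := Hk.
exists i, (i.+1 + j), (i.+1 + j + 1 + k). split; try (clear -Hk; lia).
have E1 : i.+1 + j + 1 + k = j.+1 + i.+1 + k by lia.
by move: HP; rewrite -Hx -Hy -Hz -E1.
Qed.

Lemma bad_contains a : bad a -> exists sig,
  (sig = [:: 1; 0; 0] \/ sig = [:: 1; 0; 2] \/ sig = [:: 2; 0; 1]) /\ contains a sig.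
Proof.
move=> [i [j [k [Hij Hjk Hk HP]]]].
exists (reduction [:: nth 0 a i; nth 0 a j; nth 0 a k]); split; first exact: red3_of.
clear HP.
exists [:: nth 0 a i; nth 0 a j; nth 0 a k]; split => //.
apply: idx_sub_cons; first lia.
have -> : nth 0 a j = nth 0 (drop i.+1 a) (j - i.+1) by rewrite nth_drop; congr nth; lia.
apply: idx_sub_cons; first by rewrite size_drop; lia.
have -> : nth 0 a k = nth 0 (drop (j - i.+1).+1 (drop i.+1 a)) (k - j.+1)
  by rewrite drop_drop nth_drop; congr nth; lia.
apply: idx_sub_cons; first by rewrite !size_drop; lia.
exact: sub0seq.
Qed.

Lemma avoid3 a : (avoids a [:: 1; 0; 0] /\ avoids a [:: 1; 0; 2] /\ avoids a [:: 2; 0; 1]) <-> ~ bad a.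
Proof.
split.
- move=> [H1 [H2 H3]] /bad_contains [sig [[->|[->|->]] Hc]]; by [apply: H1 | apply: H2 | apply: H3].
- move=> Hb; split; [|split] => Hc; apply: Hb; apply: contains_bad Hc; auto.
Qed.


Lemma smax_ub (a : seq nat) (x : nat) : x \in a -> x <= smax a.
Proof. by move=> Hx; rewrite /smax; apply: (@leq_bigmax_seq _ _ predT id x Hx). Qed.

Lemma max_in (s : seq nat) : s != [::] -> \max_(x <- s) x \in s.
Proof.
elim: s => [|x s IH] // _.
rewrite big_cons inE.
case: s IH => [|y s] IH; first by rewrite big_nil maxn0 eqxx.
have := IH isT. rewrite /maxn. case: ifP => _ H; last by rewrite eqxx.
by rewrite H orbT.
Qed.

Lemma smax_in (s : seq nat) : s != [::] -> smax s \in s.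
Proof. exact: max_in. Qed.

Lemma premax_some (a : seq nat) pm : premax a = Some pm ->
  [/\ pm \in a, pm < smax a & forall x, x \in a -> x < smax a -> x <= pm].
Proof.
rewrite /premax; case: ifP => // Hh [<-].
have Hf : [seq x <- a | x < smax a] != [::] by rewrite -has_filter.
have := max_in Hf. rewrite big_filter mem_filter => /andP[H1 H2].
split => // x Hx Hlt.
exact: (@leq_bigmax_seq _ a (fun x => x < smax a) id x Hx Hlt).
Qed.

Lemma premax_none (a : seq nat) : premax a = None -> forall x, x \in a -> x = smax a.
Proof.
rewrite /premax; case: ifP => // /negbT /hasPn H _ x Hx.
have := H x Hx. have := smax_ub Hx. lia.
Qed.

Lemma mem_idx (s : seq nat) x : x \in s -> exists2 t, t < size s & nth 0 s t = x.
Proof. move=> Hx; exists (index x s); [by rewrite index_mem | exact: nth_index]. Qed.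

Lemma count_two (s : seq nat) v i j : i < j -> j < size s -> nth 0 s i = v -> nth 0 s j = v ->
  1 < count_mem v s.
Proof.
move=> Hij Hj Hi Hjv.
rewrite -(cat_take_drop j s) count_cat.
have H1 : v \in take j s.
  rewrite -Hi -(nth_take 0 Hij). apply: mem_nth. by rewrite size_takel // ltnW.
have H2 : v \in drop j s.
  rewrite -Hjv (_ : nth 0 s j = nth 0 (drop j s) 0); last by rewrite nth_drop addn0. apply: mem_nth. by rewrite size_drop subn_gt0.
rewrite -!has_pred1 !has_count in H1 H2. lia.
Qed.

Lemma count_le1 (s : seq nat) v :
  (forall i j, i < j -> j < size s -> nth 0 s i = v -> nth 0 s j = v -> False) ->
  count_mem v s <= 1.
Proof.
elim: s => [|x s IH] //= H.
case: eqP => [Hx|Hx].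
- have -> : count_mem v s = 0.
    apply/count_memPn/negP => Hv.
    apply: (H 0 (index v s).+1) => //=; last exact: nth_index.
    by rewrite ltnS index_mem.
  by [].
- rewrite add0n. apply: IH => i j Hij Hj Hi Hjv.
  by apply: (H i.+1 j.+1).
Qed.

Lemma last_occ (s : seq nat) (x : nat) : x \in s ->
  exists L, [/\ L < size s, nth 0 s L = x & forall t, L < t -> t < size s -> nth 0 s t != x].
Proof.
elim: s => [|y s IH] //.
rewrite inE. case Hin: (x \in s).
- move=> _. have [L [H1 H2 H3]] := IH Hin.
  exists L.+1; split => //= [] [|t] //= Ht Hts. exact: H3.
- rewrite orbF => /eqP Exy. exists 0; split => //= [] [|t] //= _ Ht.
  apply/eqP => E. move: Hin. by rewrite -E mem_nth.
Qed.


Lemma good_nobad (a p1 q2 q3 : seq nat) : good_decomp a p1 q2 q3 -> ~ bad a.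
Proof.
move=> [Ea H] [i [j [k [Hij Hjk Hk HP]]]].
move: HP; rewrite /Pb => /and3P[Hyx Hyz Hzx].
have Hle : forall t, t < size a -> nth 0 a t <= smax a by move=> t Ht; apply: smax_ub; apply: mem_nth.
case Hpm: (premax a) H => [pm|] H; last first.
  have E : forall t, t < size a -> nth 0 a t = smax a by move=> t Ht; apply: premax_none => //; apply: mem_nth.
  move: Hyx. rewrite !E //; lia.
have [pmin pmlt pmmax] := premax_some Hpm.
move: H => [Hs1 [Hm1 [Hq2 [Hall2 [Hhd [Hcnt [Hs3 Hall3]]]]]]].
set m := smax a in Hle pmlt pmmax Hm1 Hall2 Hhd.
have Hsz : size a = size p1 + size q2 + size q3 by rewrite Ea !size_cat addnA.
have Fp : forall t, t < size p1 -> nth 0 a t = nth 0 p1 t by move=> t Ht; rewrite Ea nth_cat Ht.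
have Fq : forall t, size p1 <= t -> t < size p1 + size q2 -> nth 0 a t = nth 0 q2 (t - size p1).
  move=> t H1 H2; rewrite Ea nth_cat ltnNge H1 /= nth_cat ifT //; lia.
have Fr : forall t, size p1 + size q2 <= t -> nth 0 a t = nth 0 q3 (t - size p1 - size q2).
  move=> t H1; rewrite Ea nth_cat ifF; last lia. rewrite nth_cat ifF; last lia. congr nth; lia.
have Hpmx : forall t, t < size a -> pm < nth 0 a t -> nth 0 a t = m.
  move=> t Ht H. have := Hle t Ht. case: (ltnP (nth 0 a t) m) => Hc; last lia. have := pmmax (nth 0 a t) (mem_nth 0 Ht) Hc. lia.
case: (ltnP j (size p1)) => Hj1.
  move: Hyx. rewrite !Fp //; last lia.
  have := sorted_leq_nth leq_trans leqnn 0 Hs1.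
  move=> /(_ i j); rewrite !inE => H. have := H (ltn_trans Hij Hj1) Hj1 (ltnW Hij). lia.
case: (ltnP j (size p1 + size q2)) => Hj2.
  have Hy : nth 0 a j = pm.
    have := all_nthP 0 Hall2 (j - size p1) ltac:(lia). rewrite -Fq //.
    have := Hle i ltac:(lia). move=> H1 /orP[/eqP|/eqP]; lia.
  have Hx : nth 0 a i = m by apply: Hpmx; lia.
  case: (ltnP k (size p1 + size q2)) => Hk2.
    have Hz : nth 0 a k = pm.
      have := all_nthP 0 Hall2 (k - size p1) ltac:(lia). rewrite -Fq //; last lia.
      move=> /orP[/eqP|/eqP]; lia.
    have := count_two (s := q2) (v := pm) (i := j - size p1) (j := k - size p1) ltac:(lia) ltac:(lia)
        (esym (etrans (esym Hy) (Fq j Hj1 Hj2))) (esym (etrans (esym Hz) (Fq k ltac:(lia) Hk2))).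
    lia.
  have := all_nthP 0 Hall3 (k - size p1 - size q2) ltac:(lia). rewrite -Fr //. lia.
have := sorted_ltn_nth (leT := fun x y => y < x) (fun b c d (H1 : b < c) (H2 : d < b) => ltn_trans H2 H1) 0 Hs3.
move=> /(_ (j - size p1 - size q2) (k - size p1 - size q2)); rewrite !inE => H.
have := H ltac:(lia) ltac:(lia) ltac:(lia). rewrite -!Fr //; lia.
Qed.


Lemma nobad_good (a : seq nat) : a != [::] -> ~ bad a -> exists p1 q2 q3, good_decomp a p1 q2 q3.
Proof.
move=> Hne Hnb.
have NB : forall i j k, i < j -> j < k -> k < size a -> Pb (nth 0 a i) (nth 0 a j) (nth 0 a k) -> False
  by move=> i j k H1 H2 H3 HP; apply: Hnb; exists i, j, k.
have Hle : forall t, t < size a -> nth 0 a t <= smax a by move=> t Ht; apply: smax_ub; apply: mem_nth.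
case Hpm: (premax a) => [pm|]; last first.
  exists [::], a, [::]. split; first by rewrite cats0. rewrite Hpm. split => //; split => //; split => //.
  apply/allP => x Hx; by rewrite (premax_none Hpm Hx).
have [pmin pmlt pmmax] := premax_some Hpm.
have min : smax a \in a by rewrite smax_in.
remember (smax a) as m eqn:Em.
have Hpmx : forall t, t < size a -> nth 0 a t < m -> nth 0 a t <= pm.
  by move=> t Ht Hc; apply: (pmmax (nth 0 a t) (mem_nth 0 Ht) Hc).
set i0 := index m a.
have Hi0 : i0 < size a by rewrite index_mem.
have Ha0 : nth 0 a i0 = m by rewrite nth_index.
have Hbef : forall t, t < i0 -> nth 0 a t != m.
  by move=> t Ht; apply/negbT; exact: (before_find 0 Ht).
have [L [HL HaL HaftL]] := last_occ min.
have Hi0L : i0 <= L.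
  by case: (leqP i0 L) => // H; have := HaftL i0 H Hi0; rewrite Ha0 eqxx.
have Hlt : forall t, t < size a -> nth 0 a t != m -> nth 0 a t < m.
  by move=> t Ht H; have := Hle t Ht; lia.
have D : forall k1 k2, i0 < k1 -> k1 < k2 -> k2 < size a -> nth 0 a k1 < m -> nth 0 a k2 < m ->
    nth 0 a k2 < nth 0 a k1.
  move=> k1 k2 H1 H2 H3 H4 H5; case: (ltnP (nth 0 a k2) (nth 0 a k1)) => // H6; exfalso.
  apply: (NB i0 k1 k2) => //. rewrite /Pb Ha0. apply/and3P; split; lia.
have Haft : forall t, L < t -> t < size a -> nth 0 a t < m.
  by move=> t H1 H2; apply: Hlt => //; apply: HaftL.
set e := if (L.+1 < size a) && (nth 0 a L.+1 == pm) then L.+2 else L.+1.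
have He1 : L < e by rewrite /e; case: ifP.
have He2 : e <= size a by rewrite /e; case: ifP => [/andP[]|]; lia.
have Hmid : forall t, L < t -> t < e -> nth 0 a t = pm.
  rewrite /e; case: ifP => [/andP[_ /eqP H]|_] t H1 H2; last lia.
  by have -> : t = L.+1 by lia.
have Hend : forall t, e <= t -> t < size a -> nth 0 a t < pm.
  move=> t H1 H2. have Ht := Haft t ltac:(lia) H2. have Hp := Hpmx t H2 Ht.
  move: H1; rewrite /e; case: ifP => [/andP[H3 /eqP H4]|H3] H1.
  - have := D L.+1 t ltac:(lia) ltac:(lia) H2 (Haft _ (ltnSn L) H3) Ht. lia.
  - case: (ltnP L.+1 t) => H5.
    + have H6 := Haft L.+1 (ltnSn L) ltac:(lia).
      have := D L.+1 t ltac:(lia) H5 H2 H6 Ht. have := Hpmx L.+1 ltac:(lia) H6. lia.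
    + have Et : t = L.+1 by lia.
      subst t. rewrite H2 /= in H3. move/negbT: H3. lia.
clearbody e.
have Sp : size (take i0 a) = i0 by rewrite size_takel // ltnW.
have Np : forall t, t < i0 -> nth 0 (take i0 a) t = nth 0 a t by move=> t Ht; rewrite nth_take.
have Sq : size (take (e - i0) (drop i0 a)) = e - i0 by rewrite size_takel // size_drop; lia.
have Nq : forall t, t < e - i0 -> nth 0 (take (e - i0) (drop i0 a)) t = nth 0 a (i0 + t)
  by move=> t Ht; rewrite nth_take // nth_drop.
have Sr : size (drop e a) = size a - e by rewrite size_drop.
have Nr : forall t, nth 0 (drop e a) t = nth 0 a (e + t) by move=> t; rewrite nth_drop.
exists (take i0 a), (take (e - i0) (drop i0 a)), (drop e a).
split.
  rewrite -{1}(cat_take_drop i0 a). congr cat.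
  by rewrite -{1}(cat_take_drop (e - i0) (drop i0 a)) drop_drop subnK //; lia.
rewrite Hpm -Em.
split.
  apply/(sortedP 0) => t; rewrite Sp => Ht. rewrite !Np; try lia.
  case: (leqP (nth 0 a t) (nth 0 a t.+1)) => // H; exfalso.
  apply: (NB t t.+1 i0) => //; try lia.
  have := Hle t.+1 ltac:(lia). have := Hbef t ltac:(lia).
  rewrite /Pb Ha0 => H1 H2; apply/and3P; split; lia.
split.
  move=> Hp. have := smax_in Hp. move/mem_idx => [t Ht Et]. rewrite -Et. rewrite Sp in Ht.
  rewrite Np //. have := Hbef t Ht. have := Hle t ltac:(lia). lia.
split; first by rewrite -size_eq0 Sq; lia.
split.
  apply/(all_nthP 0) => t; rewrite Sq => Ht. rewrite Nq //=.
  case: (leqP (i0 + t) L) => Hu; last first.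
    have -> : nth 0 a (i0 + t) = pm by apply: Hmid; lia.
    by rewrite eqxx orbT.
  case: (eqVneq (nth 0 a (i0 + t)) m) => [_ | Hne']; first done.
  have Hum := Hlt (i0 + t) ltac:(lia) Hne'.
  have Hup := Hpmx (i0 + t) ltac:(lia) Hum.
  case: (eqVneq (nth 0 a (i0 + t)) pm) => [_|Hne2]; first by rewrite orbT.
  exfalso. have [p Hp Ep] := mem_idx pmin.
  case: (ltngtP p (i0 + t)) => Hpu.
  - have HuL : i0 + t < L by case: (ltngtP (i0 + t) L) => // E; [lia | by move: Hne'; rewrite E HaL eqxx].
    apply: (NB p (i0 + t) L) => //. rewrite /Pb Ep HaL. apply/and3P; split; lia.
  - have Hiu : i0 < i0 + t by case: (ltngtP i0 (i0 + t)) => // E; [lia | by move: Hne'; rewrite -E Ha0 eqxx].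
    apply: (NB i0 (i0 + t) p) => //. rewrite /Pb Ep Ha0. apply/and3P; split; lia.
  - by move: Hne2; rewrite -Hpu Ep eqxx.
split; first by rewrite -nth0 Nq ?addn0 //; lia.
split.
  apply: count_le1 => t1 t2 H12; rewrite Sq => H2. rewrite !Nq; try lia. move=> E1 E2.
  have Ht1 : 0 < t1.
    case: (posnP t1) => // Z. move: E1; rewrite Z addn0 Ha0 => E. lia.
  have := D (i0 + t1) (i0 + t2) ltac:(lia) ltac:(lia) ltac:(lia) ltac:(lia) ltac:(lia). lia.
split.
  apply/(sortedP 0) => t; rewrite Sr => Ht. rewrite !Nr.
  have := D (e + t) (e + t.+1) ltac:(lia) ltac:(lia) ltac:(lia) (Haft (e + t) ltac:(lia) ltac:(lia))
     (Haft (e + t.+1) ltac:(lia) ltac:(lia)). done.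
apply/(all_nthP 0) => t; rewrite Sr => Ht. rewrite Nr. apply: Hend; lia.
Qed.


Theorem mainTheorem1 (n : nat) (a : seq nat) :
  1 <= n -> inv_seq n a ->
  (avoids a [:: 1; 0; 0] /\ avoids a [:: 1; 0; 2] /\ avoids a [:: 2; 0; 1]) <->
  exists p1 q2 q3, good_decomp a p1 q2 q3.
Proof.
move=> Hn [Hsz _].
rewrite avoid3. split.
- apply: nobad_good. by rewrite -size_eq0 Hsz -lt0n.
- move=> [p1 [q2 [q3 H]]]. exact: good_nobad H.
Qed.
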